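(* Let $G(T)$ be the graph inverse semigroup of the unary tree $T$, endowed with a Hausdorff topology $\tau$ making it a topological semigroup. Then $(G(T),\tau)$ embeds (as a subsemigroup and topological subspace) densely into a CLP-compact topological semigroup $S$ if and only if $(G(T),\tau)$ is compact, i.e., $\tau=\tau_c$.
   Context: All spaces are Hausdorff; CLP-compact means every cover by clopen sets has a finite subcover. The unary tree $T$ has vertex set $\omega$ and edges $(n,n+1)$ with source $n$ and range $n+1$. The graph inverse semigroup $G(T)$ is the semigroup with zero $0$ generated by the vertices, the edges and formal inverses $e^{-1}$ of edges subject to: for vertices $a,b$: $ab=a$ if $a=b$, else $0$; for edges $e,f$: $s(e)e=er(e)=e$, $e^{-1}s(e)=r(e)e^{-1}=e^{-1}$, $e^{-1}f=r(e)$ if $e=f$, else $0$. The topology $\tau_c$ on $G(T)$: non-zero elements are isolated and the open neighborhoods of $0$ are the cofinite subsets containing $0$. *)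

(* Defs.v *)
From Stdlib Require Import Arith Lia List.

(** Vertices are the naturals, edges (n,n+1) with source n and range n+1.
    In T there is a unique path from i to k whenever i <= k.  Every non-zero
    element of G(T) has the normal form  u v^{-1}  with u, v paths and
    r(u) = r(v); we write [GPath a b c] for  u v^{-1}  where u is the path
    a -> c and v is the path b -> c (a <= c, b <= c). *)
Inductive GT : Type :=
| GZero : GT
| GPath (a b c : nat) (ha : a <= c) (hb : b <= c) : GT.

Definition max_l {a c c'} (h : a <= c) : a <= Nat.max c c' :=
  Nat.le_trans _ _ _ h (Nat.le_max_l c c').
Definition max_r {b c c'} (h : b <= c') : b <= Nat.max c c' :=
  Nat.le_trans _ _ _ h (Nat.le_max_r c c').

(** Multiplication: (u v^{-1})(w z^{-1}) = u p z^{-1} if w = v p,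
    u (z q)^{-1} if v = w q, and 0 otherwise.  In T, one of v,w is a prefix
    of the other iff they start at the same vertex. *)
Definition gmul (x y : GT) : GT :=
  match x, y with
  | GPath a b c ha _, GPath a' b' c' _ hb' =>
      if Nat.eq_dec b a' then GPath a b' (Nat.max c c') (max_l ha) (max_r hb')
      else GZero
  | _, _ => GZero
  end.

Definition gvertex (n : nat) : GT := GPath n n n (le_n n) (le_n n).
Definition gedge (n : nat) : GT :=
  GPath n (S n) (S n) (le_S _ _ (le_n n)) (le_n (S n)).
Definition gedge_inv (n : nat) : GT :=
  GPath (S n) n (S n) (le_n (S n)) (le_S _ _ (le_n n)).

Definition is_topology {X : Type} (O : (X -> Prop) -> Prop) : Prop :=
  O (fun _ => True) /\
  (forall F : (X -> Prop) -> Prop, (forall U, F U -> O U) ->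
       O (fun x => exists U, F U /\ U x)) /\
  (forall U V, O U -> O V -> O (fun x => U x /\ V x)).

Definition hausdorff {X : Type} (O : (X -> Prop) -> Prop) : Prop :=
  forall x y : X, x <> y -> exists U V, O U /\ O V /\ U x /\ V y /\
      (forall z, U z -> V z -> False).

Definition continuous_mul {X : Type} (O : (X -> Prop) -> Prop)
  (m : X -> X -> X) : Prop :=
  forall x y W, O W -> W (m x y) ->
    exists U V, O U /\ O V /\ U x /\ V y /\
      (forall a b, U a -> V b -> W (m a b)).

Definition associative {X : Type} (m : X -> X -> X) : Prop :=
  forall x y z, m x (m y z) = m (m x y) z.

Definition is_topological_semigroup {X : Type} (O : (X -> Prop) -> Prop)
  (m : X -> X -> X) : Prop :=
  associative m /\ is_topology O /\ continuous_mul O m.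

Definition covers {X : Type} (F : (X -> Prop) -> Prop) : Prop :=
  forall x, exists U, F U /\ U x.

Definition has_finite_subcover {X : Type} (F : (X -> Prop) -> Prop) : Prop :=
  exists l : list (X -> Prop), (forall U, In U l -> F U) /\
     (forall x, exists U, In U l /\ U x).

Definition compact {X : Type} (O : (X -> Prop) -> Prop) : Prop :=
  forall F, (forall U, F U -> O U) -> covers F -> has_finite_subcover F.

Definition clopen {X : Type} (O : (X -> Prop) -> Prop) (U : X -> Prop) : Prop :=
  O U /\ O (fun x => ~ U x).

Definition clp_compact {X : Type} (O : (X -> Prop) -> Prop) : Prop :=
  forall F, (forall U, F U -> clopen O U) -> covers F -> has_finite_subcover F.

Definition semigroup_embedding {X Y : Type}
  (OX : (X -> Prop) -> Prop) (mX : X -> X -> X)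
  (OY : (Y -> Prop) -> Prop) (mY : Y -> Y -> Y) (f : X -> Y) : Prop :=
  (forall x y, f x = f y -> x = y) /\
  (forall x y, f (mX x y) = mY (f x) (f y)) /\
  (forall U, OX U <-> exists V, OY V /\ forall x, U x <-> V (f x)).

Definition dense_image {X Y : Type} (OY : (Y -> Prop) -> Prop) (f : X -> Y) : Prop :=
  forall V, OY V -> (exists y, V y) -> exists x, V (f x).

(** The topology tau_c on G(T): non-zero elements are isolated and the
    neighbourhoods of 0 are the cofinite sets containing 0. *)
Definition cofinite {X : Type} (U : X -> Prop) : Prop :=
  exists l : list X, forall x, ~ U x -> In x l.

Definition tau_c (U : GT -> Prop) : Prop := U GZero -> cofinite U.

(* Main.v *)
Require Import Defs.
From Stdlib Require Import Arith Lia List Classical FunctionalExtensionality PropExtensionality ProofIrrelevance.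

Lemma GPath_eq a b c h1 h2 a' b' c' h1' h2' :
  a = a' -> b = b' -> c = c' -> GPath a b c h1 h2 = GPath a' b' c' h1' h2'.
Proof. intros -> -> ->. f_equal; apply proof_irrelevance. Qed.

Lemma set_ext {X} (U V : X -> Prop) : (forall x, U x <-> V x) -> U = V.
Proof. intro H. apply functional_extensionality; intro x. apply propositional_extensionality. auto. Qed.

Definition height (x : GT) : nat := match x with GZero => 0 | GPath _ _ c _ _ => c end.

Definition mkG a b c : GT :=
  match le_dec a c, le_dec b c with
  | left h1, left h2 => GPath a b c h1 h2
  | _, _ => GZero end.

Definition enum N := GZero :: flat_map (fun c => flat_map (fun a =>
   map (fun b => mkG a b c) (seq 0 (S N))) (seq 0 (S N))) (seq 0 (S N)).

Lemma enum_in N x : height x <= N -> In x (enum N).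
Proof.
  destruct x as [|a b c ha hb]; intro H; [left; reflexivity|right]; simpl in H.
  apply in_flat_map; exists c; split; [apply in_seq; lia|].
  apply in_flat_map; exists a; split; [apply in_seq; lia|].
  apply in_map_iff; exists b; split; [|apply in_seq; lia].
  unfold mkG; destruct (le_dec a c); destruct (le_dec b c); try lia.
  apply GPath_eq; auto.
Qed.

Lemma gmul_assoc : associative gmul.
Proof.
  intros x y z.
  destruct x as [|a b c ha hb], y as [|a' b' c' ha' hb'], z as [|a'' b'' c'' ha'' hb''];
  simpl; try reflexivity;
  repeat (destruct Nat.eq_dec; simpl); try reflexivity; try (apply GPath_eq; lia); congruence.
Qed.


Lemma open_local {X} (O : (X->Prop)->Prop) : is_topology O ->
  forall U, (forall x, U x -> exists V, O V /\ V x /\ forall z, V z -> U z) -> O U.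
Proof.
  intros [_ [HU _]] U H.
  assert (E: U = (fun x => exists V, (O V /\ forall z, V z -> U z) /\ V x)).
  { apply set_ext; intro x; split.
    - intro Ux; destruct (H x Ux) as [V [? [? ?]]]; exists V; tauto.
    - intros [V [[_ HV] Vx]]; auto. }
  rewrite E. apply HU. intros V [? _]; auto.
Qed.

Lemma open_neq {X} (O : (X->Prop)->Prop) : is_topology O -> hausdorff O ->
  forall z : X, O (fun y => y <> z).
Proof.
  intros HT Hh z. apply open_local; auto. intros y Hy.
  destruct (Hh y z Hy) as [U [V [OU [OV [Uy [Vz Hd]]]]]].
  exists U; split; auto; split; auto. intros w Uw ->; eauto.
Qed.

Lemma open_neq_list {X} (O : (X->Prop)->Prop) : is_topology O -> hausdorff O ->
  forall (l : list X) (P : X -> Prop), O (fun y => forall z, In z l -> P z -> y <> z).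
Proof.
  intros HT Hh l P. induction l as [|a l IH].
  - apply open_local; auto. intros x _. exists (fun _ => True).
    split; [apply HT|]. split; auto; try (intros z _ w []).
  - apply open_local; auto. intros y Hy.
    destruct (classic (P a)) as [Pa|nPa].
    + exists (fun w => w <> a /\ forall z, In z l -> P z -> w <> z).
      split; [apply HT; [apply open_neq; auto|exact IH]|].
      split; [split; [apply Hy; simpl; auto|intros; apply Hy; simpl; auto]|].
      intros w [H1 H2] z [<-|Hz] Pz; auto.
    + exists (fun w => forall z, In z l -> P z -> w <> z). split; auto.
      split; [intros; apply Hy; simpl; auto|].
      intros w H z [<-|Hz] Pz; [contradiction|auto].
Qed.

Lemma open_pre_l {X} (O : (X->Prop)->Prop) m : is_topology O -> continuous_mul O m ->
  forall g V, O V -> O (fun y => V (m g y)).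
Proof.
  intros HT Hc g V OV. apply open_local; auto. intros y Hy.
  destruct (Hc g y V OV Hy) as [U1 [U2 [? [? [? [? H]]]]]].
  exists U2; split; auto.
Qed.

Lemma open_pre_r {X} (O : (X->Prop)->Prop) m : is_topology O -> continuous_mul O m ->
  forall g V, O V -> O (fun y => V (m y g)).
Proof.
  intros HT Hc g V OV. apply open_local; auto. intros y Hy.
  destruct (Hc y g V OV Hy) as [U1 [U2 [? [? [? [? H]]]]]].
  exists U1; split; auto.
Qed.

Lemma open_fix_l {X} (O : (X->Prop)->Prop) m : is_topology O -> hausdorff O -> continuous_mul O m ->
  forall g, O (fun y => m g y <> y).
Proof.
  intros HT Hh Hc g. apply open_local; auto. intros y Hy.
  destruct (Hh _ _ Hy) as [U [V [OU [OV [Uy [Vz Hd]]]]]].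
  destruct (Hc g y U OU Uy) as [U1 [U2 [? [? [? [? H]]]]]].
  exists (fun z => U2 z /\ V z). split; [apply HT; auto|]. split; auto.
  intros z [Hz1 Hz2] E. apply (Hd z); auto. rewrite <- E. auto.
Qed.

Lemma iso_G tau : is_topology tau -> hausdorff tau -> continuous_mul tau gmul ->
  forall g, g <> GZero -> tau (fun y => y = g).
Proof.
  intros HT Hh Hc g Hg. destruct g as [|a b c ha hb]; [congruence|].
  set (g := GPath a b c ha hb).
  set (p := GPath a a (S c) (le_S _ _ ha) (le_S _ _ ha)).
  assert (E : (fun y => y = g) = (fun y =>
     gmul (gmul (gvertex a) y) (gvertex b) <> GZero /\
     (gmul p y <> y /\ forall z, In z (enum c) -> z <> g -> y <> z))).
  { apply set_ext; intro y; split.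
    - intros ->. unfold g, p, gvertex; simpl.
      destruct (Nat.eq_dec a a); [|congruence]. simpl.
      destruct (Nat.eq_dec b b); [|congruence].
      split; [discriminate|]. split.
      + intro H. apply (f_equal height) in H. simpl in H. destruct (Nat.eq_dec a a); [|congruence]. simpl in H. destruct c; lia.
      + intros z _ Hz E; auto.
    - intros [H1 [H2 H3]].
      destruct y as [|a' b' c' ha' hb']; [simpl in H1; congruence|].
      unfold gvertex in H1; simpl in H1.
      destruct (Nat.eq_dec a a'); [|simpl in H1; congruence]. simpl in H1.
      destruct (Nat.eq_dec b' b); [|congruence]. subst a' b'.
      unfold p in H2; simpl in H2. destruct (Nat.eq_dec a a); [|congruence].
      assert (c' <= c).
      { destruct (le_lt_dec c' c); auto. exfalso; apply H2; apply GPath_eq; destruct c'; lia. }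
      apply NNPP; intro Hn. apply (H3 _ (enum_in c (GPath a b c' ha' hb') H) Hn); reflexivity. }
  rewrite E. apply HT.
  - change (tau (fun y => (fun w => (fun u => u <> GZero) (gmul w (gvertex b))) (gmul (gvertex a) y))).
    apply (open_pre_l tau gmul HT Hc (gvertex a) (fun w => gmul w (gvertex b) <> GZero)).
    apply (open_pre_r tau gmul HT Hc (gvertex b) (fun u => u <> GZero)). apply open_neq; auto.
  - apply HT. apply open_fix_l; auto. apply open_neq_list; auto.
Qed.

Lemma tauc_open tau : is_topology tau -> hausdorff tau -> continuous_mul tau gmul ->
  forall U, tau_c U -> tau U.
Proof.
  intros HT Hh Hc U HU. apply open_local; auto. intros x Ux.
  destruct (classic (x = GZero)) as [->|Hx].
  - destruct (HU Ux) as [l Hl].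
    exists (fun y => forall z, In z l -> z <> GZero -> y <> z).
    split; [apply open_neq_list; auto|]. split.
    + intros z _ Hz E; auto.
    + intros z Hz. apply NNPP; intro nU.
      apply (Hz z (Hl z nU)); auto. intros ->; contradiction.
  - exists (fun y => y = x). split; [apply iso_G; auto|]. split; auto.
    intros z ->; auto.
Qed.

Lemma compact_tauc tau : is_topology tau -> hausdorff tau -> continuous_mul tau gmul ->
  compact tau -> forall U, tau U -> tau_c U.
Proof.
  intros HT Hh Hc Hcp U HU H0.
  set (F := fun V : GT -> Prop => V = U \/ exists g, g <> GZero /\ V = (fun y => y = g)).
  destruct (Hcp F) as [l [Hl Hcov]].
  - intros V [->|[g [Hg ->]]]; auto. apply iso_G; auto.
  - intro x. destruct (classic (U x)) as [Ux|nUx].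
    + exists U; split; auto. left; auto.
    + exists (fun y => y = x). split; auto. right; exists x; split; auto.
      intros ->; contradiction.
  - assert (Hp : forall l, (forall V, In V l -> F V) -> exists pts, forall x,
       (exists V, In V l /\ V x) -> U x \/ In x pts).
    { clear Hl Hcov l. induction l as [|V l IH]; intro Hl.
      - exists nil. intros x [V [[] _]].
      - destruct IH as [pts Hpts]. { intros; apply Hl; simpl; auto. }
        destruct (Hl V (or_introl eq_refl)) as [->|[g [_ ->]]].
        + exists pts. intros x [W [[<-|HW] Wx]]; auto. apply Hpts; eauto.
        + exists (g :: pts). intros x [W [[<-|HW] Wx]].
          * right; left; auto.
          * destruct (Hpts x) as [?|?]; eauto. right; right; auto. }
    destruct (Hp l Hl) as [pts Hpts]. exists pts. intros x nUx.
    destruct (Hpts x (Hcov x)) as [?|?]; [contradiction|auto].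
Qed.

Lemma tauc_compact tau : (forall U, tau U -> tau_c U) -> compact tau.
Proof.
  intros HU F HF Hcov.
  destruct (Hcov GZero) as [U0 [FU0 U00]].
  destruct (HU U0 (HF U0 FU0) U00) as [l Hl].
  assert (Hch : forall l : list GT, exists l2, (forall V, In V l2 -> F V) /\
     forall x, In x l -> exists V, In V l2 /\ V x).
  { clear Hl l. induction l as [|a l IH].
    - exists nil. split; [intros V []|intros x []].
    - destruct IH as [l2 [H1 H2]]. destruct (Hcov a) as [V [FV Va]].
      exists (V :: l2). split.
      + intros W [<-|HW]; auto.
      + intros x [<-|Hx]; [exists V; simpl; auto|].
        destruct (H2 x Hx) as [W [? ?]]; exists W; simpl; auto. }
  destruct (Hch l) as [l2 [H1 H2]].
  exists (U0 :: l2). split.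
  - intros W [<-|HW]; auto.
  - intro x. destruct (classic (U0 x)) as [Ux|nUx].
    + exists U0; simpl; auto.
    + destruct (H2 x (Hl x nUx)) as [W [? ?]]; exists W; simpl; auto.
Qed.

Definition SH {S} (mS : S -> S -> S) (tauS : (S -> Prop) -> Prop) (f : GT -> S) : Prop :=
  is_topology tauS /\ hausdorff tauS /\ continuous_mul tauS mS /\ clp_compact tauS /\
  (forall x y, f x = f y -> x = y) /\ (forall x y, f (gmul x y) = mS (f x) (f y)) /\
  dense_image tauS f /\ (forall g, g <> GZero -> tauS (fun z => z = f g)).

Lemma F1 {S} tau (mS : S -> S -> S) tauS f :
  is_topology tau -> hausdorff tau -> continuous_mul tau gmul ->
  is_topology tauS -> hausdorff tauS ->
  semigroup_embedding tau gmul tauS mS f -> dense_image tauS f ->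
  forall g, g <> GZero -> tauS (fun z => z = f g).
Proof.
  intros HT Hh Hc HTS HhS [Hinj [Hhom Hemb]] Hden g Hg.
  destruct (proj1 (Hemb _) (iso_G tau HT Hh Hc g Hg)) as [V [OV HV]].
  replace (fun z => z = f g) with V; auto.
  apply set_ext; intro z; split.
  - intro Vz. apply NNPP; intro Hne.
    destruct (HhS _ _ Hne) as [O1 [O2 [OO1 [OO2 [O1z [O2g Hd]]]]]].
    destruct (Hden (fun w => V w /\ O1 w)) as [x [Vx O1x]].
    + apply HTS; auto.
    + exists z; auto.
    + apply HV in Vx. subst x. eauto.
  - intros ->. apply HV; auto.
Qed.

Lemma F2 {S} (mS : S -> S -> S) tauS f : SH mS tauS f ->
  forall y, mS y (f GZero) = f GZero /\ mS (f GZero) y = f GZero.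
Proof.
  intros (HT & Hh & Hc & Hclp & Hinj & Hhom & Hden & Hiso) y. split.
  - apply NNPP; intro Hne.
    destruct (Hh _ _ Hne) as [O1 [O2 [OO1 [OO2 [O1z [O2g Hd]]]]]].
    destruct (Hc _ _ _ OO1 O1z) as [U [V [OU [OV [Uy [V0 HUV]]]]]].
    destruct (Hden U OU (ex_intro _ y Uy)) as [x Ux].
    specialize (HUV _ _ Ux V0). rewrite <- Hhom in HUV.
    replace (gmul x GZero) with GZero in HUV by (destruct x; reflexivity). eauto.
  - apply NNPP; intro Hne.
    destruct (Hh _ _ Hne) as [O1 [O2 [OO1 [OO2 [O1z [O2g Hd]]]]]].
    destruct (Hc _ _ _ OO1 O1z) as [U [V [OU [OV [U0 [Vy HUV]]]]]].
    destruct (Hden V OV (ex_intro _ y Vy)) as [x Vx].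
    specialize (HUV _ _ U0 Vx). rewrite <- Hhom in HUV.
    replace (gmul GZero x) with GZero in HUV by reflexivity. eauto.
Qed.

Definition acc {S} (tauS : (S -> Prop) -> Prop) (f : GT -> S) (B : GT -> Prop) (y : S) :=
  forall O, tauS O -> O y -> exists x, B x /\ O (f x).

Lemma F3 {S} (mS : S -> S -> S) tauS f : SH mS tauS f ->
  forall B : GT -> Prop, (forall x, B x -> x <> GZero) ->
  (forall y, (forall x, B x -> y <> f x) -> acc tauS f B y -> False) ->
  exists N, forall x, B x -> height x <= N.
Proof.
  intros (HT & Hh & Hc & Hclp & Hinj & Hhom & Hden & Hiso) B HB Hna.
  set (D := fun z => forall x, B x -> z <> f x).
  assert (HD : forall y, D y -> exists O, tauS O /\ O y /\ forall x, B x -> ~ O (f x)).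
  { intros y Hy. apply NNPP; intro Hn. apply (Hna y Hy). intros O HO Oy.
    apply NNPP; intro Hn2. apply Hn. exists O; split; auto; split; auto.
    intros x Bx Ox. apply Hn2; eauto. }
  set (F := fun C : S -> Prop => (exists g, B g /\ C = (fun z => z = f g)) \/ C = D).
  destruct (Hclp F) as [l [Hl Hcov]].
  - intros C [[g [Bg ->]]| ->].
    + split; [apply Hiso; auto|]. apply open_neq; auto.
    + split.
      * apply open_local; auto. intros z Dz. destruct (HD z Dz) as [O [OO [Oz HO]]].
        exists O; split; auto; split; auto. intros w Ow x Bx ->. eapply HO; eauto.
      * apply open_local; auto. intros z nDz.
        assert (exists x, B x /\ z = f x) as [x [Bx ->]].
        { apply NNPP; intro Hn; apply nDz; intros x Bx E; apply Hn; eauto. }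
        exists (fun w => w = f x). split; [apply Hiso; auto|]. split; auto.
        intros w -> Dw. apply (Dw x Bx); auto.
  - intro z. destruct (classic (D z)) as [Dz|nDz].
    + exists D; split; auto. right; auto.
    + assert (exists x, B x /\ z = f x) as [x [Bx ->]].
      { apply NNPP; intro Hn; apply nDz; intros x Bx E; apply Hn; eauto. }
      exists (fun w => w = f x). split; auto. left; eauto.
  - assert (Hb : forall l, (forall C, In C l -> F C) -> exists N, forall C, In C l ->
        forall g, B g -> C (f g) -> height g <= N).
    { clear Hl Hcov l. induction l as [|C l IH]; intro Hl.
      - exists 0. intros C [].
      - destruct IH as [N HN]. { intros; apply Hl; simpl; auto. }
        destruct (Hl C (or_introl eq_refl)) as [[g0 [Bg0 ->]]| ->].
        + exists (Nat.max N (height g0)). intros C' [<-|HC'] g Bg HCg.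
          * apply Hinj in HCg. subst. lia.
          * specialize (HN C' HC' g Bg HCg). lia.
        + exists N. intros C' [<-|HC'] g Bg HCg.
          * exfalso. apply (HCg g Bg); auto.
          * eauto. }
    destruct (Hb l Hl) as [N HN]. exists N. intros x Bx.
    destruct (Hcov (f x)) as [C [HC Cx]]. eauto.
Qed.

Lemma acc_not_img {S} (mS : S -> S -> S) tauS f : SH mS tauS f ->
  forall W B y, tauS W -> W (f GZero) -> (forall x, B x -> ~ W (f x)) ->
  (forall x, B x -> y <> f x) -> acc tauS f B y -> forall g, y <> f g.
Proof.
  intros (HT & Hh & Hc & Hclp & Hinj & Hhom & Hden & Hiso) W B y OW W0 HB Hy Hacc g ->.
  destruct (classic (g = GZero)) as [->|Hg].
  - destruct (Hacc W OW W0) as [x [Bx Wx]]. eapply HB; eauto.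
  - destruct (Hacc _ (Hiso g Hg) eq_refl) as [x [Bx E]]. apply (Hy x Bx); auto.
Qed.

Lemma acc_inf {S} (mS : S -> S -> S) tauS f : SH mS tauS f ->
  forall B y, (forall g, y <> f g) -> acc tauS f B y ->
  forall O N, tauS O -> O y -> exists x, B x /\ N < height x /\ O (f x).
Proof.
  intros (HT & Hh & Hc & Hclp & Hinj & Hhom & Hden & Hiso) B y Hy Hacc O N OO Oy.
  destruct (Hacc (fun z => O z /\ forall w, In w (map f (enum N)) -> True -> z <> w))
    as [x [Bx [Ox Hx]]].
  - apply HT; auto. apply open_neq_list; auto.
  - split; auto. intros w Hw _. apply in_map_iff in Hw. destruct Hw as [g [<- _]]; auto.
  - exists x. split; auto. split; auto.
    destruct (le_lt_dec (height x) N) as [Hle|]; auto. exfalso.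
    apply (Hx (f x)); auto. apply in_map. apply enum_in; auto.
Qed.

Lemma gvertex_mul n m : gmul (gvertex n) (gvertex m) = if Nat.eq_dec n m then gvertex n else GZero.
Proof.
  unfold gvertex, gmul. destruct (Nat.eq_dec n m); auto. subst. apply GPath_eq; lia.
Qed.

Lemma no_acc_SH {S} (mS : S -> S -> S) tauS f : SH mS tauS f ->
  forall W (P : GT -> Prop), tauS W -> W (f GZero) -> (forall x, P x -> x <> GZero) ->
  (forall y B, (forall x, B x -> P x /\ ~ W (f x)) -> (forall g, y <> f g) -> acc tauS f B y -> False) ->
  exists N, forall x, P x -> N < height x -> W (f x).
Proof.
  intros HS W P OW W0 HP Hmain.
  destruct (F3 mS tauS f HS (fun x => P x /\ ~ W (f x))) as [N HN].
  - intros x [Px _]; auto.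
  - intros y Hy Hacc. eapply Hmain; [| |exact Hacc]; [intros x Hx; exact Hx|].
    eapply acc_not_img; eauto. intros x [_ ?]; auto. exact Hy.
  - exists N. intros x Px Hx. apply NNPP; intro nW.
    specialize (HN x (conj Px nW)). lia.
Qed.

Lemma vert_tail {S} (mS : S -> S -> S) tauS f : SH mS tauS f ->
  forall W, tauS W -> W (f GZero) -> exists N, forall n, N < n -> W (f (gvertex n)).
Proof.
  intros HS W OW W0.
  destruct (no_acc_SH mS tauS f HS W (fun x => exists n, x = gvertex n) OW W0) as [N HN].
  - intros x [n ->]; discriminate.
  - intros y B HB Hy Hacc.
    pose proof HS as (HT & Hh & Hc & Hclp & Hinj & Hhom & Hden & Hiso).
    assert (Hyy : mS y y = f GZero).
    { apply NNPP; intro Hne.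
      destruct (Hh _ _ Hne) as [O1 [O2 [OO1 [OO2 [O1z [O2g Hd]]]]]].
      destruct (Hc _ _ _ OO1 O1z) as [U [V [OU [OV [Uy [Vy HUV]]]]]].
      destruct (Hacc U OU Uy) as [x1 [Bx1 Ux1]].
      destruct (HB x1 Bx1) as [[n ->] _].
      destruct (acc_inf mS tauS f HS B y Hy Hacc V n OV Vy) as [x2 [Bx2 [Hx2 Vx2]]].
      destruct (HB x2 Bx2) as [[m ->] _]. simpl in Hx2.
      specialize (HUV _ _ Ux1 Vx2). rewrite <- Hhom, gvertex_mul in HUV.
      destruct (Nat.eq_dec n m); [lia|]. eauto. }
    destruct (Hc y y W OW) as [U [V [OU [OV [Uy [Vy HUV]]]]]]; [rewrite Hyy; auto|].
    destruct (Hacc (fun z => U z /\ V z)) as [x [Bx [Ux Vx]]]; [apply HT; auto|auto|].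
    destruct (HB x Bx) as [[n ->] nW].
    specialize (HUV _ _ Ux Vx). rewrite <- Hhom, gvertex_mul in HUV.
    destruct (Nat.eq_dec n n); [|congruence]. contradiction.
  - exists N. intros n Hn. apply HN; eauto.
Qed.

Definition is_path (x : GT) := match x with GPath a b c _ _ => b = c | GZero => False end.
Definition is_ipath (x : GT) := match x with GPath a b c _ _ => a = c | GZero => False end.

Lemma path_tail {S} (mS : S -> S -> S) tauS f : SH mS tauS f ->
  forall W, tauS W -> W (f GZero) -> exists N, forall x, is_path x -> N < height x -> W (f x).
Proof.
  intros HS W OW W0.
  apply (no_acc_SH mS tauS f HS W is_path OW W0).
  - intros x Px ->; contradiction.
  - intros y B HB Hy Hacc.
    pose proof HS as (HT & Hh & Hc & Hclp & Hinj & Hhom & Hden & Hiso).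
    destruct (Hc y (f GZero) W OW) as [U [V [OU [OV [Uy [V0 HUV]]]]]].
    { rewrite (proj1 (F2 mS tauS f HS y)); auto. }
    destruct (vert_tail mS tauS f HS V OV V0) as [N HN].
    destruct (acc_inf mS tauS f HS B y Hy Hacc U N OU Uy) as [x [Bx [Hx Ux]]].
    destruct (HB x Bx) as [Px nW].
    destruct x as [|a b c ha hb]; [contradiction|]. simpl in Px, Hx. subst b.
    specialize (HUV _ _ Ux (HN c Hx)). rewrite <- Hhom in HUV.
    apply nW. replace (GPath a c c ha hb) with (gmul (GPath a c c ha hb) (gvertex c)); auto.
    unfold gmul, gvertex. destruct (Nat.eq_dec c c); [|congruence]. apply GPath_eq; lia.
Qed.

Lemma ipath_tail {S} (mS : S -> S -> S) tauS f : SH mS tauS f ->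
  forall W, tauS W -> W (f GZero) -> exists N, forall x, is_ipath x -> N < height x -> W (f x).
Proof.
  intros HS W OW W0.
  apply (no_acc_SH mS tauS f HS W is_ipath OW W0).
  - intros x Px ->; contradiction.
  - intros y B HB Hy Hacc.
    pose proof HS as (HT & Hh & Hc & Hclp & Hinj & Hhom & Hden & Hiso).
    destruct (Hc (f GZero) y W OW) as [U [V [OU [OV [U0 [Vy HUV]]]]]].
    { rewrite (proj2 (F2 mS tauS f HS y)); auto. }
    destruct (vert_tail mS tauS f HS U OU U0) as [N HN].
    destruct (acc_inf mS tauS f HS B y Hy Hacc V N OV Vy) as [x [Bx [Hx Vx]]].
    destruct (HB x Bx) as [Px nW].
    destruct x as [|a b c ha hb]; [contradiction|]. simpl in Px, Hx. subst a.
    specialize (HUV _ _ (HN c Hx) Vx). rewrite <- Hhom in HUV.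
    apply nW. replace (GPath c b c ha hb) with (gmul (gvertex c) (GPath c b c ha hb)); auto.
    unfold gmul, gvertex. destruct (Nat.eq_dec c c); [|congruence]. apply GPath_eq; lia.
Qed.

Lemma gen_tail {S} (mS : S -> S -> S) tauS f : SH mS tauS f ->
  forall W, tauS W -> W (f GZero) -> exists N, forall x, N < height x -> W (f x).
Proof.
  intros HS W OW W0.
  pose proof HS as (HT & Hh & Hc & Hclp & Hinj & Hhom & Hden & Hiso).
  destruct (Hc (f GZero) (f GZero) W OW) as [V1 [V2 [OV1 [OV2 [V10 [V20 HV]]]]]].
  { rewrite (proj1 (F2 mS tauS f HS _)); auto. }
  destruct (path_tail mS tauS f HS V1 OV1 V10) as [N1 HN1].
  destruct (ipath_tail mS tauS f HS V2 OV2 V20) as [N2 HN2].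
  exists (Nat.max N1 N2). intros x Hx.
  destruct x as [|a b c ha hb]; [simpl in Hx; lia|]. simpl in Hx.
  replace (GPath a b c ha hb) with (gmul (GPath a c c ha (le_n c)) (GPath c b c (le_n c) hb)).
  - rewrite Hhom. apply HV; [apply HN1|apply HN2]; simpl; auto; lia.
  - unfold gmul. destruct (Nat.eq_dec c c); [|congruence]. apply GPath_eq; lia.
Qed.

Theorem lemma4p7 (tau : (GT -> Prop) -> Prop) :
  is_topology tau -> hausdorff tau -> continuous_mul tau gmul ->
  ((exists (S : Type) (mS : S -> S -> S) (tauS : (S -> Prop) -> Prop) (f : GT -> S),
       is_topological_semigroup tauS mS /\ hausdorff tauS /\ clp_compact tauS /\
       semigroup_embedding tau gmul tauS mS f /\ dense_image tauS f)
    <-> compact tau)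
  /\ (compact tau <-> (forall U, tau U <-> tau_c U)).
Proof.
  intros HT Hh Hc. split; [split|split].
  - intros [S [mS [tauS [f [[Has [HTS HcS]] [HhS [Hclp [Hemb Hden]]]]]]]].
    assert (HS : SH mS tauS f).
    { pose proof (F1 tau mS tauS f HT Hh Hc HTS HhS Hemb Hden) as Hiso.
      destruct Hemb as [Hinj [Hhom Ho]].
      exact (conj HTS (conj HhS (conj HcS (conj Hclp (conj Hinj (conj Hhom (conj Hden Hiso))))))). }
    apply tauc_compact. intros U HU U0.
    destruct (proj1 ((proj2 (proj2 Hemb)) U) HU) as [W [OW HW]].
    destruct (gen_tail mS tauS f HS W OW (proj1 (HW GZero) U0)) as [N HN].
    exists (enum N). intros x nU. apply enum_in.
    destruct (le_lt_dec (height x) N); auto. exfalso. apply nU, HW, HN; auto.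
  - intros Hcp. exists GT, gmul, tau, (fun x => x).
    split; [split; [apply gmul_assoc|split; auto]|].
    split; auto. split.
    + intros F HF. apply Hcp. intros U HU; apply (HF U HU).
    + split; [split; [auto|split; [auto|]]|].
      * intro U; split.
        -- intro HU; exists U; split; auto; tauto.
        -- intros [V [HV HUV]]. replace U with V; auto. apply set_ext; intro x; split; apply HUV.
      * intros V HV [y Vy]; exists y; auto.
  - intros Hcp U; split; [apply compact_tauc; auto|apply tauc_open; auto].
  - intros H. apply tauc_compact. intros U; apply H.
Qed.
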